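(* Assume condition (PV) holds. Then, locally (for conditioning values $d\in\mathcal{D}(\epsilon)$ and $z\in\mathcal{Z}(\epsilon)$): (a) $Y\perp\!\!\!\perp Z\mid(D,U)$; (b) $W\perp\!\!\!\perp(D,Z)\mid U$. If in addition $\eta_a\perp\!\!\!\perp U\mid D=d$ for all $d\in\mathcal{D}(\epsilon)$, then also: (c) $A\perp\!\!\!\perp U\mid D$.
   Context: Setting. All random variables live on one probability space. The variables are: - $Y\in\mathbb{R}$, the outcome; - $A\in\{0,1\}$, the treatment; - $D\in\mathbb{R}$, the running variable, with cutoff $d^*$; - $Z$, a placebo treatment, and $W$, a placebo outcome; - $U$, an unobserved confounder; - $\eta_y,\eta_w,\eta_a$, heterogeneity terms. There are structural functions $Y(a,d,z,u,\eta_y)$, $W(a,d,z,u,\eta_w)$ and $A(d,z,u,\eta_a)$, written $Y(a,d,u,\eta_y)$, $W(u,\eta_w)$ and $A(d,\eta_a)$ under exclusion. For $\epsilon>0$, $\mathcal{D}(\epsilon)=(d^*-\epsilon,d^* )\cup(d^*,d^*+\epsilon)$, and $\mathcal{Z}(\epsilon)$ is a set with $P(Z\in\mathcal{Z}(\epsilon)\mid D\in\mathcal{D}(\epsilon))=1$. (PV) There is $\epsilon>0$ such that for all $d\in\mathcal{D}(\epsilon)$ and $z\in\mathcal{Z}(\epsilon)$: (a) if $A=a$, $D=d$, $Z=z$, then $Y=Y(a,d,z,U,\eta_y)$ and $W=W(a,d,z,U,\eta_w)$ a.s.; if $D=d$, $Z=z$, then $A=A(d,z,U,\eta_a)$ a.s.;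 (b) $Z\perp\!\!\!\perp(\eta_y,\eta_a)\mid(U,D)$ and $\eta_w\perp\!\!\!\perp(D,Z)\mid U$; (c) densities exist and $f(a,d,z\mid u)>0$ whenever $f(u)>0$; (d) a.s. $Y(a,d,z,U,\eta_y)=Y(a,d,U,\eta_y)$, $W(a,d,z,U,\eta_w)=W(U,\eta_w)$ and $A(d,z,U,\eta_a)=A(d,\eta_a)$. *)

(* Defs.v *)
From HB Require Import structures.
From mathcomp Require Import all_boot all_order all_algebra.
From mathcomp Require Import all_classical all_reals all_analysis.
Set Implicit Arguments. Unset Strict Implicit. Unset Printing Implicit Defensive.
Import Order.TTheory GRing.Theory Num.Theory.
Local Open Scope classical_set_scope.
Local Open Scope ring_scope.

Definition Dset {R : realType} (dstar eps : R) : set R :=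
  [set x | dstar - eps < x < dstar + eps /\ x != dstar].

(* Conditional independence  X _||_ Y | C  under the conditional probability
   P( . | E ), for an event E (used with E = {D in D(eps)} to express the
   "local" statements).  Definition (Kallenberg): for every measurable set A of
   the range of X, the conditional probability P_E(X in A | Y, C) has a version
   that is a measurable function phi(C) of C alone, i.e. for all measurable
   B, G:
     P_E(X in A, Y in B, C in G) = E_E[ phi(C) ; Y in B, C in G ].
   Multiplying through by P(E) gives the form below (which does not need
   P(E) > 0).  Rectangles B x G generate sigma(Y, C), so this is exactly
   P_E(X in A | Y, C) = phi(C)  P_E-a.s. *)
Definition cond_indep_on {R : realType} {dT dX dY dC : measure_display}
  {T : measurableType dT} (P : probability T R) (E : set T)
  {TX : measurableType dX} {TY : measurableType dY} {TC : measurableType dC}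
  (X : T -> TX) (Y : T -> TY) (C : T -> TC) : Prop :=
  forall A : set TX, measurable A ->
  exists phi : TC -> R,
    measurable_fun setT phi /\ (forall c, 0 <= phi c <= 1) /\
    forall (B : set TY) (G : set TC), measurable B -> measurable G ->
      P (E `&` X @^-1` A `&` Y @^-1` B `&` C @^-1` G) =
      (\int[P]_(x in E `&` Y @^-1` B `&` C @^-1` G) (phi (C x))%:E)%E.

(* Main.v *)
Require Import Defs.
From HB Require Import structures.
From mathcomp Require Import all_boot all_order all_algebra.
From mathcomp Require Import all_classical all_reals all_analysis.
From mathcomp Require Import measurable_realfun.
Import Order.TTheory GRing.Theory Num.Theory.
Local Open Scope classical_set_scope.
Local Open Scope ring_scope.
Import HBNNSimple.

Section pm_def.
Context d dC (T : measurableType d) (TC : measurableType dC) (R : realType).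
Variables (P : {finite_measure set T -> \bar R}) (S : set T) (C : T -> TC).

Definition pm (mS : measurable S) (mC : measurable_fun setT C) (G : set TC) :=
  P (C @^-1` G `&` S).

Variables (mS : measurable S) (mC : measurable_fun setT C).

Let pm0 : pm mS mC set0 = 0%E.
Proof. by rewrite /pm preimage_set0 set0I measure0. Qed.

Let pm_ge0 G : (0 <= pm mS mC G)%E.
Proof. exact: measure_ge0. Qed.

Let pm_sa : semi_sigma_additive (pm mS mC).
Proof.
move=> F mF tF mUF; rewrite /pm preimage_bigcup setI_bigcupl.
apply: measure_semi_sigma_additive.
- by move=> n; apply: measurableI => //; rewrite -[X in measurable X]setTI; exact: mC.
- apply/trivIsetP => /= i j _ _ ij; rewrite setIACA -preimage_setI.
  by move/trivIsetP : tF => /(_ _ _ _ _ ij) ->//; rewrite preimage_set0 set0I.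
- rewrite -setI_bigcupl; apply: measurableI => //.
  by rewrite -preimage_bigcup -[X in measurable X]setTI; exact: mC.
Qed.

HB.instance Definition _ := isMeasure.Build _ _ _ (pm mS mC) pm0 pm_ge0 pm_sa.

Let pm_fin : fin_num_fun (pm mS mC).
Proof. by move=> U mU; rewrite /pm fin_num_measure//; apply: measurableI => //; rewrite -[X in measurable X]setTI; exact: mC. Qed.

HB.instance Definition _ := @Measure_isFinite.Build _ _ _ (pm mS mC) pm_fin.

End pm_def.
Arguments pm {d dC T TC R} P {S C} mS mC G.

Section genL.
Context d dC (T : measurableType d) (TC : measurableType dC) (R : realType).
Local Open Scope ereal_scope.

Lemma genL (m1 : {measure set T -> \bar R}) (m2 : {measure set TC -> \bar R})
  (C : T -> TC) (mC : measurable_fun setT C) (A : set T) (mA : measurable A)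
  (w : TC -> R) (mw : measurable_fun setT w) (w0 : forall y, (0 <= w y)%R)
  (H : forall G, measurable G -> m1 (A `&` C @^-1` G) = \int[m2]_(y in G) (w y)%:E)
  (f : TC -> \bar R) (mf : measurable_fun setT f) (f0 : forall y, 0 <= f y) :
  \int[m1]_(x in A) f (C x) = \int[m2]_(y in setT) (f y * (w y)%:E).
Proof.
pose h := nnsfun_approx measurableT mf.
have mCA : forall G, measurable G -> measurable (A `&` C @^-1` G).
  by move=> G mG; apply: measurableI => //; rewrite -[X in measurable X]setTI; exact: mC.
have -> : \int[m1]_(x in A) f (C x) =
    lim (\int[m1]_(x in A) (EFin \o h n) (C x) @[n --> \oo]).
  have fE x : f (C x) = lim ((EFin \o h n) (C x) @[n --> \oo]).
    by apply/esym/cvg_lim => //; apply: cvg_nnsfun_approx => // y _; exact: f0.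
  under eq_integral => x _ do rewrite fE.
  apply: monotone_convergence => //.
  - move=> n; apply/measurable_EFinP.
    apply: measurable_funTS; apply: measurableT_comp => //.
  - by move=> n x Ex //=; rewrite lee_fin.
  - by move=> x Ex a b ab; rewrite lee_fin; exact/lefP/nd_nnsfun_approx.
have -> : \int[m2]_(y in setT) (f y * (w y)%:E) =
    lim (\int[m2]_(y in setT) ((EFin \o h n) \* (EFin \o w)) y @[n --> \oo]).
  have fg y : f y * (w y)%:E = lim (((EFin \o h n) \* (EFin \o w)) y @[n --> \oo]).
    apply/esym/cvg_lim => //; apply: cvgeZr => //.
    by apply: cvg_nnsfun_approx => // z _; exact: f0.
  under eq_integral => y _ do rewrite fg.
  apply: monotone_convergence => [//| | |].
  - move=> n; apply/emeasurable_funM; apply/measurable_EFinP => //.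
  - by move=> n x Ex /=; rewrite mule_ge0 ?lee_fin.
  - by move=> x Ex a b ab/=; rewrite lee_wpmul2r ?lee_fin//; exact/lefP/nd_nnsfun_approx.
suff suf n : \int[m1]_(x in A) (EFin \o h n) (C x) =
    \int[m2]_(y in setT) ((EFin \o h n) \* (EFin \o w)) y.
  by under eq_fun do rewrite suf.
move: (h n) => s.
have mG r : measurable (s @^-1` [set r]) by rewrite -[X in measurable X]setTI; exact: measurable_funP.
have mCG r : measurable (C @^-1` (s @^-1` [set r])).
  by rewrite -[X in measurable X]setTI; apply: mC.
have key r : (0 <= r)%R -> \int[m1]_(x in A) (r * \1_(s @^-1` [set r]) (C x))%:E =
   \int[m2]_(y in setT) ((r * \1_(s @^-1` [set r]) y)%:E * (w y)%:E).
  move=> r0.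
  under eq_integral do rewrite EFinM.
  rewrite ge0_integralZl//.
  under [RHS]eq_integral do rewrite EFinM -muleA.
  rewrite ge0_integralZl//; last by move=> y _; rewrite mule_ge0 ?lee_fin.
  congr (_ * _).
  rewrite (_ : (fun x => (\1_(s @^-1` [set r]) (C x))%:E) = (fun x => (\1_(C @^-1` (s @^-1` [set r])) x)%:E))//.
  rewrite integral_indic// setIC H//.
  rewrite integral_mkcond; apply: eq_integral => y _.
  by rewrite patchE indicE; case: ifPn => _; rewrite ?mul1e ?mul0e.
  - by apply: emeasurable_funM; apply/measurable_EFinP => //; exact: measurable_indic.
  - apply/measurable_EFinP; apply: measurable_funTS; apply: measurableT_comp => //; exact: measurable_indic.
transitivity (\int[m1]_(x in A)
   (\sum_(r \in range s) (r * \1_(s @^-1` [set r]) (C x))%:E)).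
  by apply: eq_integral => t tE; rewrite /= fimfunE -fsumEFin.
rewrite ge0_integral_fsum//; last 2 first.
  - move=> r; apply/measurable_EFinP; apply: measurable_funTS.
    apply: measurable_funM => //; apply: measurableT_comp => //; exact: measurable_indic.
  - by move=> r x _; exact: nnfun_muleindic_ge0.
transitivity (\int[m2]_(y in setT) (\sum_(r \in range s)
    (r * \1_(s @^-1` [set r]) y)%:E * (w y)%:E)).
  rewrite ge0_integral_fsum//; last 2 first.
  - move=> r; apply: emeasurable_funM; apply/measurable_EFinP => //.
    apply: measurable_funM => //; exact: measurable_indic.
  - move=> r y _; rewrite mule_ge0 ?lee_fin//; have := nnfun_muleindic_ge0 s r y; by rewrite -EFinM lee_fin.
  apply: eq_fsbigr => r; rewrite inE => -[t _ <-]; apply: key.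
  exact: fun_ge0.
apply: eq_integral => y _.
rewrite -ge0_mule_fsuml => [|r]; last exact: nnfun_muleindic_ge0.
by rewrite fsumEFin // -(fimfunE _ y).
Qed.
End genL.
Arguments genL {d dC T TC R}.

Section im_def.
Context d dV (T : measurableType d) (TV : measurableType dV) (R : realType).
Variables (P : {measure set T -> \bar R}) (V : T -> TV) (w : T -> \bar R).
Local Open Scope ereal_scope.

Definition im (mV : measurable_fun setT V) (mw : measurable_fun setT w)
  (w0 : forall x, 0 <= w x) (M : set TV) := \int[P]_(x in V @^-1` M) w x.

Variables (mV : measurable_fun setT V) (mw : measurable_fun setT w) (w0 : forall x, 0 <= w x).

Let im0 : im mV mw w0 set0 = 0.
Proof. by rewrite /im preimage_set0 integral_set0. Qed.

Let im_ge0 M : 0 <= im mV mw w0 M.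
Proof. by apply: integral_ge0 => x _; exact: w0. Qed.

Let im_sa : semi_sigma_additive (im mV mw w0).
Proof.
move=> F mF tF mUF; rewrite /im preimage_bigcup.
apply: (@semi_sigma_additive_nng_induced _ _ _ P w mw w0 (fun n => V @^-1` F n)).
- by move=> n; rewrite -[X in measurable X]setTI; exact: mV.
- apply/trivIsetP => /= i j _ _ ij; rewrite -preimage_setI.
  by move/trivIsetP : tF => /(_ _ _ _ _ ij) ->//; rewrite preimage_set0.
- by rewrite -preimage_bigcup -[X in measurable X]setTI; exact: mV.
Qed.

HB.instance Definition _ := isMeasure.Build _ _ _ (im mV mw w0) im0 im_ge0 im_sa.
End im_def.
Arguments im {d dV T TV R} P {V w} mV mw w0 M.

Section ci.
Context (R : realType) dT (T : measurableType dT) (P : probability T R).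
Context (E : set T) (mE : measurable E).
Local Open Scope ereal_scope.

Lemma mpre dC (TC : measurableType dC) (C : T -> TC) (mC : measurable_fun setT C) G :
  measurable G -> measurable (C @^-1` G).
Proof. by move=> mG; rewrite -[X in measurable X]setTI; exact: mC. Qed.
Arguments mpre {dC TC C} mC {G}.

Lemma conv dC (TC : measurableType dC) (C : T -> TC) (mC : measurable_fun setT C)
  (f : TC -> \bar R) (mf : measurable_fun setT f) (f0 : forall y, 0 <= f y) :
  \int[P]_(x in E) f (C x) = \int[pm P mE mC]_(y in setT) f y.
Proof.
rewrite (@genL _ _ _ _ _ P (pm P mE mC) C mC E mE (fun=> 1%R)) //.
- by apply: eq_integral => y _; rewrite mule1.
- by move=> G mG; rewrite integral_cst// mul1e /pm setIC.
Qed.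

Lemma patch_comp dC (TC : measurableType dC) (C : T -> TC) (g : TC -> \bar R) G x :
  (g \o C) \_ (C @^-1` G) x = (g \_ G) (C x).
Proof. by rewrite !patchE. Qed.

Lemma convG dC (TC : measurableType dC) (C : T -> TC) (mC : measurable_fun setT C)
  (f : TC -> \bar R) (mf : measurable_fun setT f) (f0 : forall y, 0 <= f y) G :
  measurable G ->
  \int[P]_(x in E `&` C @^-1` G) f (C x) = \int[pm P mE mC]_(y in G) f y.
Proof.
move=> mG; rewrite integral_mkcondr [RHS]integral_mkcond.
rewrite -conv//.
- by apply/(measurable_restrictT _ mG); exact: measurable_funTS.
- by move=> y; rewrite patchE; case: ifPn.
Qed.

Lemma L2T dC (TC : measurableType dC) (C : T -> TC) (mC : measurable_fun setT C)
  (S : set T) (mS : measurable S) (psi : TC -> R) (mpsi : measurable_fun setT psi)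
  (psi0 : forall y, (0 <= psi y)%R)
  (H : forall G, measurable G ->
     P (E `&` S `&` C @^-1` G) = \int[P]_(x in E `&` C @^-1` G) (psi (C x))%:E)
  (f : TC -> \bar R) (mf : measurable_fun setT f) (f0 : forall y, 0 <= f y) :
  \int[P]_(x in E `&` S) f (C x) = \int[P]_(x in E) ((psi (C x))%:E * f (C x)).
Proof.
have mES : measurable (E `&` S) by apply: measurableI.
have mpsiE : measurable_fun setT (fun y => (psi y)%:E) by apply/measurable_EFinP.
rewrite (@genL _ _ _ _ _ P (pm P mE mC) C mC (E `&` S) mES psi) //.
- rewrite (@conv _ _ _ mC (fun y => (psi y)%:E * f y)) //.
  + by apply: eq_integral => y _; rewrite muleC.
  + exact: emeasurable_funM.
  + by move=> y; rewrite mule_ge0 ?lee_fin.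
- move=> G mG; transitivity (P (E `&` S `&` C @^-1` G)); first by [].
  by rewrite H // (@convG _ _ _ mC (fun y => (psi y)%:E)) // => y; rewrite lee_fin.
Qed.

Lemma L1 dC (TC : measurableType dC) (C : T -> TC) (mC : measurable_fun setT C)
  (S : set T) (mS : measurable S) :
  exists psi : TC -> R, measurable_fun setT psi /\ (forall y, 0 <= psi y <= 1)%R /\
  forall G, measurable G ->
    P (E `&` S `&` C @^-1` G) = \int[P]_(x in E `&` C @^-1` G) (psi (C x))%:E.
Proof.
have mES : measurable (E `&` S) by apply: measurableI.
have mED : measurable (E `&` ~` S) by apply: measurableI => //; apply: measurableC.
pose mu := pm P mE mC.
pose nu1 := pm P mES mC.
pose nu2 := pm P mED mC.
have dom (A : set T) (mA : measurable A) : A `<=` E -> pm P mA mC `<< mu.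
  move=> AE N HN B mB BN; apply/eqP; rewrite eq_le measure_ge0 andbT.
  rewrite -(HN B mB BN) /pm; apply: le_measure; rewrite ?inE.
  - by apply: measurableI => //; exact: mpre.
  - by apply: measurableI => //; exact: mpre.
  - by move=> x [? ?]; split => //; exact: AE.
have [f1 [f10 if1 Hf1]] := radon_nikodym_finite (dom _ mES (@subIsetl _ _ _)).
have [f2 [f20 if2 Hf2]] := radon_nikodym_finite (dom _ mED (@subIsetl _ _ _)).
have mf1 : measurable_fun setT f1 by exact: measurable_int if1.
have mf2 : measurable_fun setT f2 by exact: measurable_int if2.
have ae : ae_eq mu setT (f1 \+ f2) (cst 1).
  apply: integral_ae_eq => //; first exact: integrableD.
  move=> G _ mG; rewrite ge0_integralD //; last 2 first.
    exact: measurable_funTS.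
    exact: measurable_funTS.
  rewrite -Hf1 // -Hf2 // integral_cst // mul1e /pm.
  change (P (C @^-1` G `&` (E `&` S)) + P (C @^-1` G `&` (E `&` ~` S)) = P (C @^-1` G `&` E)).
  have mCG : measurable (C @^-1` G) by exact: mpre.
  rewrite -measureU.
  - by congr (P _); rewrite -setIUr -setIUr setUCr setIT.
  - exact: measurableI.
  - exact: measurableI.
  - by rewrite setIACA setIid setIACA setIid setICr !setI0.
pose psi y := fine (mine (f1 y) 1).
have psiE y : f1 y + f2 y = 1 -> (psi y)%:E = f1 y.
  move=> h; have f1le : f1 y <= 1 by rewrite -h leeDl.
  have f1fin : f1 y \is a fin_num by rewrite ge0_fin_numE ?(le_lt_trans f1le) ?ltey.
  by rewrite /psi (_ : mine _ _ = f1 y) ?fineK // /mine; case: ifPn => //; rewrite -leNgt => h1; apply/eqP; rewrite eq_le h1 f1le.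
exists psi; split.
  apply: measurableT_comp; first exact: fine_measurable.
  exact: measurable_mine.
split.
  move=> y; rewrite /psi; have := f10 y; case: (f1 y) => [r| |] //= r0.
    rewrite /mine; case: ifPn => /= [r1|_]; last by rewrite ler01 lexx.
    by move: r0 r1; rewrite lee_fin lte_fin => -> /ltW.
  by apply/andP; split; [exact: ler01|exact: lexx].
move=> G mG.
transitivity (\int[mu]_(y in G) f1 y).
  rewrite -Hf1 //.
  change (P (E `&` S `&` C @^-1` G) = P (C @^-1` G `&` (E `&` S))).
  by rewrite setIC.
have mpsi : measurable_fun setT (fun y => (psi y)%:E).
  by apply/measurable_EFinP; apply: measurableT_comp; [exact: fine_measurable|exact: measurable_mine].
rewrite (@convG _ _ _ mC (fun y => (psi y)%:E)) //; last first.
  move=> y; rewrite lee_fin /psi; have := f10 y; case: (f1 y) => [r| |] //= r0.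
    by rewrite /mine; case: ifPn => //= _; rewrite -lee_fin.
apply: ae_eq_integral => //.
- exact: measurable_funTS.
- exact: measurable_funTS.
- move: ae; apply: filterS => y /(_ I) h _; rewrite psiE //.
Qed.

Lemma ci_sym dX dY dC (TX : measurableType dX) (TY : measurableType dY)
  (TC : measurableType dC) (X : T -> TX) (Y : T -> TY) (C : T -> TC)
  (mX : measurable_fun setT X) (mY : measurable_fun setT Y) (mC : measurable_fun setT C) :
  cond_indep_on P E X Y C -> cond_indep_on P E Y X C.
Proof.
move=> h B mB.
have mYB := mpre mY mB.
have [psi [mpsi [psi01 Hpsi]]] := @L1 _ _ _ mC _ mYB.
exists psi; split => //; split => //.
move=> A G mA mG.
have [phi [mphi [phi01 Hphi]]] := h A mA.
have mXA := mpre mX mA.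
have mCG := mpre mC mG.
have psi0 : forall y, (0 <= psi y)%R by move=> y; have /andP[] := psi01 y.
have phi0 : forall y, (0 <= phi y)%R by move=> y; have /andP[] := phi01 y.
have HphiT G' : measurable G' -> P (E `&` X @^-1` A `&` C @^-1` G') =
    \int[P]_(x in E `&` C @^-1` G') (phi (C x))%:E.
  by move=> mG'; have := Hphi setT G' measurableT mG'; rewrite preimage_setT !setIT.
have mpsiE : measurable_fun setT (fun y => (psi y)%:E) by apply/measurable_EFinP.
have mphiE : measurable_fun setT (fun y => (phi y)%:E) by apply/measurable_EFinP.
rewrite (setIAC E (Y @^-1` B)) Hphi //.
transitivity (\int[P]_(x in E `&` Y @^-1` B) ((fun y => (phi y)%:E) \_ G) (C x)).
  by rewrite integral_mkcondr; apply: eq_integral => x _; exact: patch_comp.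
transitivity (\int[P]_(x in E `&` X @^-1` A) ((fun y => (psi y)%:E) \_ G) (C x)); last first.
  by rewrite [RHS]integral_mkcondr; apply: eq_integral => x _; apply/esym; exact: patch_comp.
rewrite (@L2T _ _ _ mC _ mYB _ mpsi psi0 Hpsi); last 2 first.
- by apply/(measurable_restrictT _ mG); exact: measurable_funTS.
- by move=> y; rewrite patchE; case: ifPn => // _; rewrite lee_fin.
rewrite (@L2T _ _ _ mC _ mXA _ mphi phi0 HphiT); last 2 first.
- by apply/(measurable_restrictT _ mG); exact: measurable_funTS.
- by move=> y; rewrite patchE; case: ifPn => // _; rewrite lee_fin.
apply: eq_integral => x _; rewrite !patchE; case: ifPn => _.
  by rewrite muleC.
by rewrite !mule0.
Qed.

Lemma ci_cond dX dY dC dC' (TX : measurableType dX) (TY : measurableType dY)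
  (TC : measurableType dC) (TC' : measurableType dC')
  (X : T -> TX) (Y : T -> TY) (C : T -> TC)
  (k : TC -> TC') (k' : TC' -> TC) (mk : measurable_fun setT k)
  (mk' : measurable_fun setT k') (kK : forall c, k' (k c) = c) :
  cond_indep_on P E X Y C -> cond_indep_on P E X Y (fun x => k (C x)).
Proof.
move=> H A mA; have [phi [mphi [phi01 Hphi]]] := H A mA.
exists (fun c => phi (k' c)); split; first exact: measurableT_comp.
split; first by move=> c; exact: phi01.
move=> B G mB mG.
have mkG : measurable (k @^-1` G) by rewrite -[X in measurable X]setTI; exact: mk.
have := Hphi B _ mB mkG => ->.
by apply: eq_integral => x _; rewrite kK.
Qed.

Lemma ae_set_int (S1 S2 : set T) (mS1 : measurable S1) (mS2 : measurable S2)
  (hae : {ae P, forall x, S1 x <-> S2 x})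
  (f : T -> \bar R) (mf : measurable_fun setT f) :
  \int[P]_(x in S1) f x = \int[P]_(x in S2) f x.
Proof.
rewrite integral_mkcond [RHS]integral_mkcond; apply: ae_eq_integral => //.
- by apply/(measurable_restrictT _ mS1); exact: measurable_funTS.
- by apply/(measurable_restrictT _ mS2); exact: measurable_funTS.
- move: hae; apply: filterS => x hx _; rewrite !patchE.
  case: (boolP (x \in S1)) => h1; case: (boolP (x \in S2)) => h2 //.
  + by move: h2; rewrite notin_setE => -[]; apply/hx; exact/set_mem.
  + by move: h1; rewrite notin_setE => -[]; apply/hx; exact/set_mem.
Qed.

Lemma ae_set_P (S1 S2 : set T) (mS1 : measurable S1) (mS2 : measurable S2)
  (hae : {ae P, forall x, S1 x <-> S2 x}) : P S1 = P S2.
Proof.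
have := @ae_set_int S1 S2 mS1 mS2 hae (cst 1) (measurable_cst _).
by rewrite !integral_cst // !mul1e.
Qed.

Lemma ci_fun dY dV dV' dC (TY : measurableType dY) (TV : measurableType dV)
  (TV' : measurableType dV') (TC : measurableType dC)
  (Y : T -> TY) (V : T -> TV) (V' : T -> TV') (C : T -> TC)
  (mY : measurable_fun setT Y) (mV : measurable_fun setT V)
  (mV' : measurable_fun setT V') (mC : measurable_fun setT C)
  (h : TV -> TV') (mh : measurable_fun setT h)
  (hae : {ae P, forall x, E x -> V' x = h (V x)}) :
  cond_indep_on P E Y V C -> cond_indep_on P E Y V' C.
Proof.
move=> H A mA; have [phi [mphi [phi01 Hphi]]] := H A mA.
exists phi; split => //; split => //.
move=> B G mB mG.
have mhB : measurable (h @^-1` B) by rewrite -[X in measurable X]setTI; exact: mh.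
have mYA := mpre mY mA; have mCG := mpre mC mG.
have mVB := mpre mV mhB; have mV'B := mpre mV' mB.
have mphiC : measurable_fun setT (fun x => (phi (C x))%:E).
  by apply/measurable_EFinP; exact: measurableT_comp.
rewrite (@ae_set_P _ (E `&` Y @^-1` A `&` V @^-1` (h @^-1` B) `&` C @^-1` G)); first last.
- move: hae; apply: filterS => x hx; rewrite /setI /preimage /=; split.
    by move=> [[[Ex a] b] g]; split => //; split => //; rewrite -hx.
  by move=> [[[Ex a] b] g]; split => //; split => //; rewrite hx.
- by do 3 apply: measurableI => //.
- by do 3 apply: measurableI => //.
rewrite Hphi //.
apply: ae_set_int => //.
- by do 2 apply: measurableI => //.
- by do 2 apply: measurableI => //.
- move: hae; apply: filterS => x hx; rewrite /setI /preimage /=; split.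
    by move=> [[Ex b] g]; split => //; split => //; rewrite hx.
  by move=> [[Ex b] g]; split => //; split => //; rewrite -hx.
Qed.

Ltac setsolve := apply/seteqP; split => ?; rewrite /setI /setX /preimage /=; tauto.

Lemma ci_pair dX dY dC (TX : measurableType dX) (TY : measurableType dY)
  (TC : measurableType dC) (X : T -> TX) (Y : T -> TY) (C : T -> TC)
  (mX : measurable_fun setT X) (mY : measurable_fun setT Y) (mC : measurable_fun setT C) :
  cond_indep_on P E Y X C -> cond_indep_on P E Y (fun x => (C x, X x)) C.
Proof.
move=> H B mB; have [psi [mpsi [psi01 Hpsi]]] := H B mB.
exists psi; split => //; split => //.
move=> M G mM mG.
set CX := fun x => (C x, X x).
have mCX : measurable_fun setT CX by apply: measurable_fun_pair.
have mYB := mpre mY mB; have mCG := mpre mC mG.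
have mS1 : measurable (E `&` Y @^-1` B `&` C @^-1` G) by do 2 apply: measurableI => //.
have mS2 : measurable (E `&` C @^-1` G) by apply: measurableI.
pose w := (fun x => (psi (C x))%:E) \_ (E `&` C @^-1` G).
have mw : measurable_fun setT w.
  apply/(measurable_restrictT _ mS2); apply: measurable_funTS.
  by apply/measurable_EFinP; exact: measurableT_comp.
have w0 : forall x, 0 <= w x.
  by move=> x; rewrite /w patchE; case: ifPn => // _; rewrite lee_fin; have /andP[] := psi01 (C x).
pose m1 := pm P mS1 mCX.
pose m2 := im P mCX mw w0.
have eqm : forall M, measurable M -> m1 M = m2 M.
  apply: (@measure_unique _ _ _ [set A `*` B | A in measurable & B in measurable] (fun=> setT)).
  - exact: measurable_prod_measurableType.
  - move=> _ _ [A1 mA1 [B1 mB1 <-]] [A2 mA2 [B2 mB2 <-]].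
    exists (A1 `&` A2); first exact: measurableI.
    by exists (B1 `&` B2); [exact: measurableI|rewrite setXI].
  - by move=> _; exists setT => //; exists setT => //; rewrite setXTT.
  - by apply/seteqP; split => // x _; exists 0%N.
  - move=> _ [G' mG' [A mA <-]].
    change (P (CX @^-1` (G' `*` A) `&` (E `&` Y @^-1` B `&` C @^-1` G)) =
      \int[P]_(x in CX @^-1` (G' `*` A)) w x).
    have mGG : measurable (G `&` G') by apply: measurableI.
    rewrite (_ : CX @^-1` (G' `*` A) `&` (E `&` Y @^-1` B `&` C @^-1` G) =
       E `&` Y @^-1` B `&` X @^-1` A `&` C @^-1` (G `&` G')); last by setsolve.
    rewrite Hpsi // /w -integral_mkcondr.
    by congr (integral _ _ _); setsolve.
  - move=> _; change (P (CX @^-1` setT `&` (E `&` Y @^-1` B `&` C @^-1` G)) < +oo).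
    apply: (@le_lt_trans _ _ 1); last exact: ltry.
    by apply: probability_le1; apply: measurableI => //; rewrite preimage_setT.
have HM : P (CX @^-1` M `&` (E `&` Y @^-1` B `&` C @^-1` G)) =
      \int[P]_(x in CX @^-1` M) w x := eqm M mM.
move: HM; rewrite /w -integral_mkcondr => HM.
rewrite (_ : E `&` Y @^-1` B `&` CX @^-1` M `&` C @^-1` G =
   CX @^-1` M `&` (E `&` Y @^-1` B `&` C @^-1` G)); last by setsolve.
rewrite HM; congr (integral _ _ _); setsolve.
Qed.

End ci.
Theorem lemma1
  (R : realType) (dT : measure_display) (T : measurableType dT)
  (P : probability T R)
  (dZ dW dU dEy dEw dEa : measure_display)
  (TZ : measurableType dZ) (TW : measurableType dW) (TU : measurableType dU)
  (TEy : measurableType dEy) (TEw : measurableType dEw)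
  (TEa : measurableType dEa)
  (* observed and latent variables *)
  (Y : T -> R) (A : T -> bool) (D : T -> R) (Z : T -> TZ) (W : T -> TW)
  (U : T -> TU) (eta_y : T -> TEy) (eta_w : T -> TEw) (eta_a : T -> TEa)
  (mY : measurable_fun setT Y) (mA : measurable_fun setT A)
  (mD : measurable_fun setT D) (mZ : measurable_fun setT Z)
  (mW : measurable_fun setT W) (mU : measurable_fun setT U)
  (my : measurable_fun setT eta_y) (mw : measurable_fun setT eta_w)
  (ma : measurable_fun setT eta_a)
  (* structural functions, general and under exclusion *)
  (Yf : bool -> R -> TZ -> TU -> TEy -> R)
  (Wf : bool -> R -> TZ -> TU -> TEw -> TW)
  (Af : R -> TZ -> TU -> TEa -> bool)
  (Yx : bool -> R -> TU -> TEy -> R) (Wx : TU -> TEw -> TW)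
  (Ax : R -> TEa -> bool)
  (mYx : measurable_fun setT
           (fun q : bool * R * TU * TEy => Yx q.1.1.1 q.1.1.2 q.1.2 q.2))
  (mWx : measurable_fun setT (fun q : TU * TEw => Wx q.1 q.2))
  (mAx : measurable_fun setT (fun q : R * TEa => Ax q.1 q.2))
  (* cutoff, bandwidth, local placebo set *)
  (dstar eps : R) (eps_gt0 : 0 < eps) (Zeps : set TZ) (mZeps : measurable Zeps)
  (hZeps : P (D @^-1` Dset dstar eps `\` Z @^-1` Zeps) = 0%E)
  (* (PV)(a): structural equations, for D in D(eps), Z in Z(eps) *)
  (PVa_Y : {ae P, forall x, D x \in Dset dstar eps -> Z x \in Zeps ->
            Y x = Yf (A x) (D x) (Z x) (U x) (eta_y x)})
  (PVa_W : {ae P, forall x, D x \in Dset dstar eps -> Z x \in Zeps ->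
            W x = Wf (A x) (D x) (Z x) (U x) (eta_w x)})
  (PVa_A : {ae P, forall x, D x \in Dset dstar eps -> Z x \in Zeps ->
            A x = Af (D x) (Z x) (U x) (eta_a x)})
  (* (PV)(b): local conditional independences *)
  (PVb1 : cond_indep_on P (D @^-1` Dset dstar eps)
            Z (fun x => (eta_y x, eta_a x)) (fun x => (U x, D x)))
  (PVb2 : cond_indep_on P (D @^-1` Dset dstar eps)
            eta_w (fun x => (D x, Z x)) U)
  (* (PV)(c): densities exist, positive on the support of U *)
  (PVc : exists (nuZ : {measure set TZ -> \bar R}) (f : bool -> R -> TZ -> TU -> R),
      (forall a, measurable_fun setT
                   (fun q : R * TZ * TU => f a q.1.1 q.1.2 q.2)) /\
      (forall a d z u, 0 <= f a d z u) /\
      (forall a (B : set R) (G : set TZ) (H : set TU),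
          measurable B -> measurable G -> measurable H ->
          P (A @^-1` [set a] `&` D @^-1` B `&` Z @^-1` G `&` U @^-1` H) =
          (\int[P]_(x in U @^-1` H)
             \int[lebesgue_measure]_(d in B) \int[nuZ]_(z in G)
                (f a d z (U x))%:E)%E) /\
      {ae P, forall x, forall a d z, d \in Dset dstar eps -> z \in Zeps ->
                0 < f a d z (U x)})
  (* (PV)(d): exclusion restrictions *)
  (PVd_Y : {ae P, forall x, forall a d z, d \in Dset dstar eps -> z \in Zeps ->
             Yf a d z (U x) (eta_y x) = Yx a d (U x) (eta_y x)})
  (PVd_W : {ae P, forall x, forall a d z, d \in Dset dstar eps -> z \in Zeps ->
             Wf a d z (U x) (eta_w x) = Wx (U x) (eta_w x)})
  (PVd_A : {ae P, forall x, forall d z, d \in Dset dstar eps -> z \in Zeps ->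
             Af d z (U x) (eta_a x) = Ax d (eta_a x)}) :
  (* (a) *)
  cond_indep_on P (D @^-1` Dset dstar eps) Y Z (fun x => (D x, U x)) /\
  (* (b) *)
  cond_indep_on P (D @^-1` Dset dstar eps) W (fun x => (D x, Z x)) U /\
  (* (c) under the extra assumption eta_a _||_ U | D locally *)
  (cond_indep_on P (D @^-1` Dset dstar eps) eta_a U D ->
   cond_indep_on P (D @^-1` Dset dstar eps) A U D).
Proof.
set E := D @^-1` Dset dstar eps.
have mpreD (dC : measure_display) (TC : measurableType dC) (C : T -> TC) (mC : measurable_fun setT C) G :
  measurable G -> measurable (C @^-1` G).
  by move=> mG; rewrite -[X in measurable X]setTI; exact: mC.
have mDset : measurable (Dset dstar eps).
  rewrite (_ : Dset dstar eps = `]dstar - eps, dstar + eps[ `&` ~` [set dstar]).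
    apply: measurableI; first exact: measurable_itv.
    by apply: measurableC; exact: measurable_set1.
  apply/seteqP; split => x; rewrite /Dset /= in_itv /=.
    by move=> [h1 /eqP h2]; split.
  by move=> [h1 h2]; split => //; apply/eqP.
have mE : measurable E by exact: mpreD.
have haeZ : {ae P, forall x, E x -> Zeps (Z x)}.
  exists (D @^-1` Dset dstar eps `\` Z @^-1` Zeps); split => //.
    by apply: measurableD; exact: mpreD.
  by move=> x /= /not_implyP [Ex nZ]; split.
have hA : {ae P, forall x, E x -> A x = Ax (D x) (eta_a x)}.
  apply: (filterS3 _ _ PVa_A PVd_A haeZ) => x a b c Ex.
  have Dx := mem_set Ex; have Zx := mem_set (c Ex).
  by rewrite (a Dx Zx) (b _ _ Dx Zx).
have mDZ : measurable_fun setT (fun x => (D x, Z x)) by exact: measurable_fun_pair.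
split; [|split].
-
  pose C0 := fun x => (U x, D x).
  pose eta := fun x => (eta_y x, eta_a x).
  have mC0 : measurable_fun setT C0 by exact: measurable_fun_pair.
  have meta : measurable_fun setT eta by exact: measurable_fun_pair.
  have h1 := @ci_pair _ _ _ P E mE _ _ _ _ _ _ eta Z C0 meta mZ mC0 PVb1.
  pose hY := fun q : (TU * R) * (TEy * TEa) => Yx (Ax q.1.2 q.2.2) q.1.2 q.1.1 q.2.1.
  have mhY : measurable_fun setT hY.
    have -> : hY = (fun q => Yx q.1.1.1 q.1.1.2 q.1.2 q.2) \o
        (fun q : (TU * R) * (TEy * TEa) => (Ax q.1.2 q.2.2, q.1.2, q.1.1, q.2.1)) by [].
    apply: (measurableT_comp mYx).
    have m12 : measurable_fun setT (fun q : (TU * R) * (TEy * TEa) => q.1.2).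
      exact: (measurableT_comp measurable_snd measurable_fst).
    have m11 : measurable_fun setT (fun q : (TU * R) * (TEy * TEa) => q.1.1).
      exact: (measurableT_comp measurable_fst measurable_fst).
    have m21 : measurable_fun setT (fun q : (TU * R) * (TEy * TEa) => q.2.1).
      exact: (measurableT_comp measurable_fst measurable_snd).
    have m22 : measurable_fun setT (fun q : (TU * R) * (TEy * TEa) => q.2.2).
      exact: (measurableT_comp measurable_snd measurable_snd).
    apply: measurable_fun_pair => //; apply: measurable_fun_pair => //.
    apply: measurable_fun_pair => //.
    have -> : (fun q : (TU * R) * (TEy * TEa) => Ax q.1.2 q.2.2) =
      (fun q => Ax q.1 q.2) \o (fun q : (TU * R) * (TEy * TEa) => (q.1.2, q.2.2)) by [].
    by apply: (measurableT_comp mAx); exact: measurable_fun_pair.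
  have haeY : {ae P, forall x, E x -> Y x = hY (C0 x, eta x)}.
    have hAZ : {ae P, forall x, E x -> A x = Ax (D x) (eta_a x) /\ Zeps (Z x)}.
      by apply: (filterS2 _ _ hA haeZ) => x a b Ex; split; [exact: a|exact: b].
    apply: (filterS3 _ _ PVa_Y PVd_Y hAZ) => x a b c Ex.
    have [cA cZ] := c Ex.
    have Dx := mem_set Ex; have Zx := mem_set cZ.
    by rewrite (a Dx Zx) (b _ _ _ Dx Zx) cA.
  have h2 := @ci_fun _ _ _ P E mE _ _ _ _ _ _ _ _ Z (fun x => (C0 x, eta x)) Y C0 mZ
     (measurable_fun_pair mC0 meta) mY mC0 hY mhY haeY h1.
  have h3 := @ci_sym _ _ _ P E mE _ _ _ _ _ _ Z Y C0 mZ mY mC0 h2.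
  pose sw := fun q : TU * R => (q.2, q.1).
  pose sw' := fun q : R * TU => (q.2, q.1).
  have msw : measurable_fun setT sw by exact: measurable_fun_pair.
  have msw' : measurable_fun setT sw' by exact: measurable_fun_pair.
  have kK : forall q, sw' (sw q) = q by case.
  exact: (@ci_cond _ _ _ P E _ _ _ _ _ _ _ _ _ _ _ _ _ msw msw' kK h3).
-
  have h1 := @ci_sym _ _ _ P E mE _ _ _ _ _ _ eta_w (fun x => (D x, Z x)) U mw mDZ mU PVb2.
  have h2 := @ci_pair _ _ _ P E mE _ _ _ _ _ _ eta_w (fun x => (D x, Z x)) U mw mDZ mU h1.
  have hW : {ae P, forall x, E x -> W x = (fun q => Wx q.1 q.2) (U x, eta_w x)}.
    apply: (filterS3 _ _ PVa_W PVd_W haeZ) => x a b c Ex.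
    have Dx := mem_set Ex; have Zx := mem_set (c Ex).
    by rewrite (a Dx Zx) (b _ _ _ Dx Zx).
  have h3 := @ci_fun _ _ _ P E mE _ _ _ _ _ _ _ _ (fun x => (D x, Z x))
    (fun x => (U x, eta_w x)) W U mDZ (measurable_fun_pair mU mw) mW mU _ mWx hW h2.
  exact: (@ci_sym _ _ _ P E mE _ _ _ _ _ _ (fun x => (D x, Z x)) W U mDZ mW mU h3).
-
  move=> H.
  have h1 := @ci_sym _ _ _ P E mE _ _ _ _ _ _ eta_a U D ma mU mD H.
  have h2 := @ci_pair _ _ _ P E mE _ _ _ _ _ _ eta_a U D ma mU mD h1.
  have h3 := @ci_fun _ _ _ P E mE _ _ _ _ _ _ _ _ U
    (fun x => (D x, eta_a x)) A D mU (measurable_fun_pair mD ma) mA mD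
    (fun q => Ax q.1 q.2) mAx hA h2.
  exact: (@ci_sym _ _ _ P E mE _ _ _ _ _ _ U A D mU mA mD h3).
Qed.
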